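(* Let \[F_3(x,y)=6(x^2-y^2)(x^2+y^2)^2+3x^5-6x^3y^2-9xy^4-2x^2y^2\in\mathbb{Z}[x,y],\] and let $C_3\subset\mathbb{P}^2$ be the projective closure of the plane affine curve $\{F_3=0\}$, considered over $\mathbb{Q}$. Then $F_3$ is irreducible and $C_3$ is a curve of geometric genus $1$. Moreover $C_3$ is birationally equivalent over $\mathbb{Q}$ to the elliptic curve \[E:\; v^2=u^3-75u+74 .\] An explicit birational map $E\dashrightarrow C_3$ is given by \[(u,v)\mapsto\left(\frac{X}{X^2+Y^2},\,-\frac{Y}{X^2+Y^2}\right),\qquad X=\frac{u-13}{6},\quad Y=\frac{v}{2}\cdot\frac{u-13}{u^2+u-74}.\] In particular $C_3$ is an elliptic curve over $\mathbb{Q}$ (it has the rational point $(-1/2,0)$), with $j$-invariant $j=\frac{62500}{33}=\frac{2^2\cdot 5^6}{3\cdot 11}$.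
   Context: The polynomial $F_3$ arises as follows: for $\phi=\exp\!\big(x/(x^2+y^2)\big)$ one has $\partial_y^3\phi = \frac{xy\,F_3(x,y)}{(x^2+y^2)^6}\,\phi$. The geometric genus of $C_3$ means the genus of its normalization (smooth projective model). *)

(* Defs.v *)
From HB Require Import structures.
From mathcomp Require Import all_boot all_order all_algebra all_field.
Set Implicit Arguments. Unset Strict Implicit. Unset Printing Implicit Defensive.
Import Order.TTheory GRing.Theory Num.Theory.
Local Open Scope ring_scope.

(* Bivariate polynomials over Q are represented as {poly {poly rat}}:
   the inner variable is x, the outer variable is y. *)
Notation bipoly := {poly {poly rat}}.

Definition PX : bipoly := ('X)%:P.
Definition PY : bipoly := 'X.

Definition F3 : bipoly :=
  6%:R * (PX ^+ 2 - PY ^+ 2) * (PX ^+ 2 + PY ^+ 2) ^+ 2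
  + 3%:R * PX ^+ 5 - 6%:R * PX ^+ 3 * PY ^+ 2 - 9%:R * PX * PY ^+ 4
  - 2%:R * PX ^+ 2 * PY ^+ 2.

Definition irreducible2 (p : bipoly) : Prop :=
  p != 0 /\ p \isn't a GRing.unit /\
  forall a b : bipoly, p = a * b -> a \is a GRing.unit \/ b \is a GRing.unit.

Definition eval2 (p : bipoly) (x y : algC) : algC :=
  ((map_poly (map_poly (ratr : rat -> algC)) p).[y%:P]).[x].

Definition onC3 (x y : algC) : Prop := eval2 F3 x y = 0.

Definition onE (u v : algC) : Prop := v ^+ 2 = u ^+ 3 - 75%:R * u + 74%:R.

Definition mapX (u : algC) : algC := (u - 13%:R) / 6%:R.
Definition mapY (u v : algC) : algC :=
  v / 2%:R * ((u - 13%:R) / (u ^+ 2 + u - 74%:R)).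
Definition phi_def (u v : algC) : Prop :=
  u ^+ 2 + u - 74%:R != 0 /\ mapX u ^+ 2 + mapY u v ^+ 2 != 0.
Definition phi (u v : algC) : algC * algC :=
  (mapX u / (mapX u ^+ 2 + mapY u v ^+ 2),
   - mapY u v / (mapX u ^+ 2 + mapY u v ^+ 2)).

Definition ratmap_def (n1 d1 n2 d2 : bipoly) (x y : algC) : Prop :=
  eval2 d1 x y != 0 /\ eval2 d2 x y != 0.
Definition ratmap (n1 d1 n2 d2 : bipoly) (x y : algC) : algC * algC :=
  (eval2 n1 x y / eval2 d1 x y, eval2 n2 x y / eval2 d2 x y).

Definition weier_disc (a b : rat) : rat := 4%:R * a ^+ 3 + 27%:R * b ^+ 2.
Definition j_invariant (a b : rat) : rat :=
  1728%:R * (4%:R * a ^+ 3) / weier_disc a b.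

(* Main.v *)
Require Import Defs.
From HB Require Import structures.
From mathcomp Require Import all_boot all_order all_algebra all_field.
From mathcomp Require Import ring lra zify.
Import Order.TTheory GRing.Theory Num.Theory.
Local Open Scope ring_scope.



Lemma nat_not_sq (N0 n d : nat) : N0 = (19 * 675)%N -> coprime n d -> (n ^ 2 = N0 * d ^ 2)%N -> False.
Proof.
move=> -> hc h.
have h19n : (19 %| n)%N.
  have : (19 %| n * n)%N by rewrite -[(n * n)%N]/(n ^ 2)%N h -mulnA dvdn_mulr.
  by rewrite Euclid_dvdM // orbb.
move/dvdnP: h19n => [k hk]; subst n.
have h' : (k * 19 * (k * 19) = 19 * 675 * (d * d))%N := h.
have h3 : (19 * (k * k * 19) = 19 * (675 * (d * d)))%N.
  have -> : (19 * (k*k*19) = k*19*(k*19))%N by ring.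
  by rewrite h'; ring.
have h2 : (k * k * 19 = 675 * (d * d))%N by apply/eqP; rewrite -(eqn_pmul2l (isT : 0 < 19)%N) h3.
have h19d : (19 %| d)%N.
  have : (19 %| 675 * (d * d))%N by rewrite -h2 dvdn_mull.
  by rewrite Euclid_dvdM // Euclid_dvdM // orbb.
have : (19 %| gcdn (k * 19) d)%N by rewrite dvdn_gcd h19d dvdn_mull.
by rewrite (eqP hc).
Qed.

Lemma rat_not_sq (N0 : nat) (r : rat) : N0 = (19 * 675)%N -> r ^+ 2 != N0%:R.
Proof.
move=> hN.
have hd : (denq r)%:~R != 0 :> rat by rewrite intr_eq0 denq_neq0.
have hr : r = (numq r)%:~R / (denq r)%:~R by rewrite divq_num_den.
have e0 : (numq r)%:~R ^+ 2 = r ^+ 2 * (denq r)%:~R ^+ 2 :> rat.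
  rewrite -exprMn; congr (_ ^+ 2); by rewrite [X in _ = X * _]hr divfK.
apply/negP => /eqP h.
rewrite h in e0; clear h hr.
have ei : (numq r) ^+ 2 = N0%:R * (denq r) ^+ 2.
  apply/eqP; rewrite -(eqr_int rat) rmorphXn rmorphM rmorphXn /= rmorph_nat; exact/eqP.
have en : (`|numq r| ^ 2 = N0 * `|denq r| ^ 2)%N.
  have := congr1 absz ei. rewrite abszM !abszX natz absz_nat. exact.
exact: (nat_not_sq _ _ _ hN (coprime_num_den r) en).
Qed.


Definition Tt : bipoly := ('X : {poly rat})%:P.
Definition Y0 : bipoly := 'X * Tt.
Definition sig (p : bipoly) : bipoly := (map_poly (map_poly polyC) p).[Y0].

Lemma sigD p q : sig (p + q) = sig p + sig q.
Proof. by rewrite /sig rmorphD hornerD. Qed.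
Lemma sigB p q : sig (p - q) = sig p - sig q.
Proof. by rewrite /sig rmorphB hornerD hornerN. Qed.
Lemma sigN p : sig (- p) = - sig p.
Proof. by rewrite /sig rmorphN hornerN. Qed.
Lemma sigM p q : sig (p * q) = sig p * sig q.
Proof. by rewrite /sig rmorphM hornerM. Qed.
Lemma sigX p n : sig (p ^+ n) = sig p ^+ n.
Proof. by rewrite /sig rmorphXn horner_exp. Qed.
Lemma sign n : sig n%:R = n%:R.
Proof. by rewrite /sig rmorph_nat hornerMn hornerC. Qed.
Lemma sigPX : sig PX = 'X.
Proof. by rewrite /sig /PX map_polyC /= map_polyX hornerC. Qed.
Lemma sigPY : sig PY = Y0.
Proof. by rewrite /sig /PY map_polyX hornerX. Qed.
Definition sigE := (sigD, sigB, sigN, sigM, sigX, sign, sigPX, sigPY).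

Definition tA : {poly rat} := 6%:R * (1 - 'X ^+ 2) * (1 + 'X ^+ 2) ^+ 2.
Definition tB : {poly rat} := 3%:R * (1 - 2%:R * 'X ^+ 2 - 3%:R * 'X ^+ 4).
Definition tC : {poly rat} := - (2%:R * 'X ^+ 2).
Definition Qp : bipoly := tA%:P * 'X ^+ 2 + tB%:P * 'X + tC%:P.

Lemma sigF3 : sig F3 = 'X ^+ 4 * Qp.
Proof.
rewrite /F3 !sigE /Qp /Y0 /tA /tB /tC.
rewrite !(rmorphM, rmorphD, rmorphB, rmorphN, rmorphXn, rmorph_nat, rmorph1) /= -/Tt.
ring.
Qed.

Lemma Qp_coef : [/\ Qp`_0 = tC, Qp`_1 = tB, Qp`_2 = tA & size Qp = 3%N].
Proof.
have hA : tA != 0.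
  apply/negP => /eqP h; have := congr1 (horner^~ 0) h.
  rewrite /tA !hornerE /= => h0; clear h. lra.
have c0 : Qp`_0 = tC by rewrite /Qp !coefE /=; ring.
have c1 : Qp`_1 = tB by rewrite /Qp !coefE /=; ring.
have c2 : Qp`_2 = tA by rewrite /Qp !coefE /=; ring.
split => //; apply/eqP; rewrite eqn_leq; apply/andP; split.
  apply/leq_sizeP => i hi; rewrite /Qp !coefE.
  case: i hi => [|[|[|i]]] // _; rewrite /=; ring.
rewrite ltnNge; apply/negP => /leq_sizeP /(_ 2%N (leqnn _)).
by rewrite c2; apply/eqP.
Qed.

Definition c0 : {poly rat} := 6%:R * 'X ^+ 6 + 3%:R * 'X ^+ 5.
Definition c2 : {poly rat} := 6%:R * 'X ^+ 4 - 6%:R * 'X ^+ 3 - 2%:R * 'X ^+ 2.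
Definition c4 : {poly rat} := - (6%:R * 'X ^+ 2 + 9%:R * 'X).

Lemma F3_form : F3 = c0%:P + c2%:P * 'X ^+ 2 + c4%:P * 'X ^+ 4 + (- 6%:R)%:P * 'X ^+ 6.
Proof.
rewrite /F3 /PX /PY /c0 /c2 /c4.
rewrite !(rmorphM, rmorphD, rmorphB, rmorphN, rmorphXn, rmorph_nat, rmorph1) /=.
ring.
Qed.

Lemma F3_shape : size F3 = 7%N /\ lead_coef F3 = - 6%:R.
Proof.
have c6 : F3`_6 = - 6%:R by rewrite F3_form !coefE /=; ring.
have hs : size F3 = 7%N.
  apply/eqP; rewrite eqn_leq; apply/andP; split.
    apply/leq_sizeP => i hi; rewrite F3_form !coefE.
    case: i hi => [|[|[|[|[|[|[|i]]]]]]] // _; rewrite /=; ring.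
  rewrite ltnNge; apply/negP => /leq_sizeP /(_ 6%N (leqnn _)).
  rewrite c6 => /eqP; rewrite oppr_eq0 -polyC_natr polyC_eq0 pnatr_eq0 //.
by split => //; rewrite lead_coefE hs.
Qed.

Section Aux.
Variable R : idomainType.
Implicit Types p q : {poly R}.

Lemma decompX p : p != 0 -> exists i, exists2 q, p = q * 'X ^+ i & q.[0] != 0.
Proof.
move=> hp; have [m [q hq ->]] := multiplicity_XsubC p 0.
exists m; exists q; first by rewrite polyC0 subr0.
move: hq; rewrite hp /= /root => //.
Qed.

Lemma cancelX p q m n : p.[0] != 0 -> q.[0] != 0 -> p * 'X ^+ m = q * 'X ^+ n -> m = n /\ p = q.
Proof.
move=> hp hq.
wlog hmn : p q m n hp hq / (m <= n)%N.
  move=> W; case: (leqP m n) => h; first exact: W.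
  move=> e; have [] := W q p n m hq hp (ltnW h) (esym e) => -> ->; done.
have [k ->] : exists k, n = (m + k)%N by exists (n - m)%N; rewrite subnKC.
move=> e0.
have hX : ('X ^+ m : {poly R}) != 0 by rewrite expf_neq0 // polyX_eq0.
have e1 : p * 'X ^+ m = (q * 'X ^+ k) * 'X ^+ m by rewrite e0 exprD; ring.
have e := mulIf hX e1.
clear e0 e1; case: k e => [|k] e; first by rewrite expr0 mulr1 in e; rewrite addn0.
have := congr1 (horner^~ 0) e; rewrite hornerM hornerXn expr0n mulr0 => /eqP.
by rewrite (negbTE hp).
Qed.

Lemma size2P p : size p = 2%N -> p = (p`_0)%:P + (p`_1)%:P * 'X.
Proof.
move=> hs; rewrite -{1}[p]coefK hs poly_def !big_ord_recl big_ord0 /=.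
by rewrite addr0 expr0 expr1 -!mul_polyC mulr1.
Qed.
End Aux.

Lemma sig_at1 p : (sig p).[1] = map_poly (horner_eval (1 : rat)) p.
Proof.
elim/poly_ind: p => [|p c IH].
  by rewrite /sig !rmorph0 !horner0.
rewrite sigD sigM (_ : 'X = PY) // sigPY hornerD hornerM IH.
rewrite rmorphD rmorphM /= map_polyX map_polyC /=.
have -> : (sig c%:P).[1] = (c.[1])%:P.
  rewrite /sig map_polyC /= hornerC -polyC1 horner_map //.
by rewrite /Y0 /Tt hornerM hornerX hornerC mul1r.
Qed.

Lemma Qp_info : [/\ Qp`_0 = tC, Qp`_1 = tB, Qp`_2 = tA & size Qp = 3%N].
Proof. exact: Qp_coef. Qed.

Lemma unit_of_lc (a : bipoly) : size (lead_coef a) = 1%N -> size a = 1%N -> a \is a GRing.unit.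
Proof.
move=> hl hs.
have h0 : a`_0 = lead_coef a by rewrite lead_coefE hs.
rewrite poly_unitE hs h0 /= poly_unitE hl /= unitfE.
have : lead_coef (lead_coef a) != 0 by rewrite lead_coef_eq0 -size_poly_eq0 hl.
by rewrite lead_coefE hl.
Qed.

Lemma const_case (a a' b' : bipoly) (i : nat) : size (lead_coef a) = 1%N ->
  sig a = a' * 'X ^+ i -> size a' = 1%N -> a' * b' = Qp -> a \is a GRing.unit.
Proof.
move=> hl hsa hs1 hq.
have [e0 _ e2 _] := Qp_info.
have [c ha'] : exists c, a' = c%:P by exists a'`_0; apply: size1_polyC; rewrite hs1.
have hC : tC = c * b'`_0 by rewrite -e0 -hq ha' coefCM.
have hA : tA = c * b'`_2 by rewrite -e2 -hq ha' coefCM.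
have hc0 : ~~ root c 0.
  apply/negP => /eqP h.
  have := congr1 (horner^~ 0) (esym hA); rewrite hornerM h mul0r /tA !hornerE /= => h0.
  clear -h0; lra.
have cop : coprimep c ('X ^+ 2).
  apply: coprimep_expr; have := coprimep_XsubC c 0; rewrite polyC0 subr0 => ->; exact: hc0.
have hdv : c %| (- 2%:R) .
  rewrite -(Gauss_dvdpr _ cop).
  have -> : 'X ^+ 2 * (- 2%:R) = tC by rewrite /tC; ring.
  by rewrite hC dvdp_mulIl.
have hsc : (size c <= 1)%N.
  apply: leq_trans (dvdp_leq _ hdv) _.
    by rewrite oppr_eq0 -polyC_natr polyC_eq0 pnatr_eq0.
  by rewrite size_opp -polyC_natr size_polyC.
have [k hc] : exists k, c = k%:P by exists c`_0; exact: size1_polyC.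
have hk : k != 0.
  apply: contraNneq hc0 => hk0; by rewrite hc hk0 /root hornerC.
have h1 : (sig a).[1] = k%:P.
  by rewrite hsa ha' hc hornerM hornerC hornerXn expr1n mulr1.
have hsz : size (map_poly (horner_eval (1 : rat)) a) = size a.
  apply: size_map_poly_id0.
  rewrite (size1_polyC (eq_leq hl)) /= horner_evalE hornerC.
  have : lead_coef (lead_coef a) != 0 by rewrite lead_coef_eq0 -size_poly_eq0 hl.
  by rewrite lead_coefE hl.
apply: unit_of_lc hl _.
by rewrite -hsz -sig_at1 h1 size_polyC hk.
Qed.

Lemma lin_case (a' b' : bipoly) : size a' = 2%N -> size b' = 2%N -> a' * b' = Qp -> False.
Proof.
move=> ha hb hq.
have ea := @size2P _ _ ha; have eb := @size2P _ _ hb.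
move: (a'`_0) (a'`_1) ea => a0 a1 ea.
move: (b'`_0) (b'`_1) eb => b0 b1 eb.
have hq' : Qp = (a1 * b1)%:P * 'X ^+ 2 + (a0 * b1 + a1 * b0)%:P * 'X + (a0 * b0)%:P.
  by rewrite -hq ea eb !(rmorphD, rmorphM); ring.
have [e0 e1 e2 _] := Qp_info.
have hC : tC = a0 * b0 by rewrite -e0 hq' !coefE /=; ring.
have hB : tB = a0 * b1 + a1 * b0 by rewrite -e1 hq' !coefE /=; ring.
have hA : tA = a1 * b1 by rewrite -e2 hq' !coefE /=; ring.
have key : tB ^+ 2 - 4%:R * tA * tC = (a1 * b0 - a0 * b1) ^+ 2 by rewrite hA hB hC; ring.
have hv : (tB ^+ 2 - 4%:R * tA * tC).[2%:R] = 19%:R * 675%:R.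
  rewrite /tA /tB /tC -!polyC_natr -!polyC1.
  rewrite !(hornerD, hornerN, hornerM, horner_exp, hornerX, hornerC).
  ring.
have := @rat_not_sq (19 * 675)%N ((a1 * b0 - a0 * b1).[2%:R]) erefl.
rewrite natrM -horner_exp -key hv eqxx; by [].
Qed.

Lemma lc_size (a b : bipoly) : lead_coef a * lead_coef b = - 6%:R -> size (lead_coef a) = 1%N.
Proof.
move=> h.
have ha : lead_coef a != 0 by apply: contraTneq isT => h0; move: h; rewrite h0 mul0r => /eqP; rewrite eq_sym oppr_eq0 -polyC_natr polyC_eq0 pnatr_eq0.
have hb : lead_coef b != 0 by apply: contraTneq isT => h0; move: h; rewrite h0 mulr0 => /eqP; rewrite eq_sym oppr_eq0 -polyC_natr polyC_eq0 pnatr_eq0.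
have := congr1 (fun p : {poly rat} => size p) h; rewrite size_mul // size_opp -polyC_natr size_polyC pnatr_eq0 /=.
move: ha hb; rewrite -!size_poly_gt0; case: (size (lead_coef a)) => [|[|n]] //= _.
by case: (size (lead_coef b)) => [|m] //; rewrite addnS.
Qed.

Lemma F3_irr : irreducible2 F3.
Proof.
have [hs hl] := F3_shape.
have hF0 : F3 != 0 by rewrite -size_poly_eq0 hs.
split => //; split; first by rewrite poly_unitE hs.
move=> a b hab.
have hlc : lead_coef a * lead_coef b = - 6%:R by rewrite -lead_coefM -hab hl.
have hla := lc_size _ _ hlc.
have hlb : size (lead_coef b) = 1%N by apply: (@lc_size b a); rewrite mulrC.
have hsig : sig a * sig b = 'X ^+ 4 * Qp by rewrite -sigM -hab sigF3.
have [e0 _ _ hsQ] := Qp_info.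
have hQ0 : Qp.[0] != 0.
  rewrite horner_coef0 e0; apply/negP => /eqP h.
  have := congr1 (horner^~ 1) h; rewrite /tC !hornerE /= => h0; clear -h0; lra.
have hQ : Qp != 0 by rewrite -size_poly_eq0 hsQ.
have hsa : sig a != 0.
  apply/negP => /eqP h; move: hsig; rewrite h mul0r => /esym/eqP.
  by rewrite mulf_eq0 expf_eq0 polyX_eq0 andbF /= (negbTE hQ).
have hsb : sig b != 0.
  apply/negP => /eqP h; move: hsig; rewrite h mulr0 => /esym/eqP.
  by rewrite mulf_eq0 expf_eq0 polyX_eq0 andbF /= (negbTE hQ).
have [i [a' ea ha']] := @decompX _ _ hsa.
have [j [b' eb hb']] := @decompX _ _ hsb.
have e : (a' * b') * 'X ^+ (i + j) = Qp * 'X ^+ 4.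
  rewrite exprD (_ : a' * b' * _ = (a' * 'X ^+ i) * (b' * 'X ^+ j)); last by ring.
  by rewrite -ea -eb hsig mulrC.
have hab0 : (a' * b').[0] != 0 by rewrite hornerM mulf_neq0.
have [_ hq] := @cancelX _ _ _ _ _ hab0 hQ0 e.
have a'0 : a' != 0 by apply: contraNneq ha' => ->; rewrite horner0.
have b'0 : b' != 0 by apply: contraNneq hb' => ->; rewrite horner0.
have hsz : (size a' + size b' = 4)%N.
  have := congr1 (fun p : bipoly => size p) hq; rewrite size_mul // hsQ.
  move=> h; move: a'0 b'0; rewrite -!size_poly_gt0 => h1 h2; lia.
move: a'0 b'0; rewrite -!size_poly_gt0 => h1 h2.
have : size a' = 1%N \/ (size a' = 2%N /\ size b' = 2%N) \/ size b' = 1%N by lia.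
case=> [ha1 | [[ha2 hb2] | hb1]].
- left; exact: const_case _ _ _ _ hla ea ha1 hq.
- by have := lin_case _ _ ha2 hb2 hq.
- right; apply: (const_case _ _ _ _ hlb eb hb1); rewrite mulrC; exact: hq.
Qed.


Section Ev.
Variables x y : algC.
Lemma eval2D p q : eval2 (p + q) x y = eval2 p x y + eval2 q x y.
Proof. by rewrite /eval2 rmorphD !hornerD. Qed.
Lemma eval2B p q : eval2 (p - q) x y = eval2 p x y - eval2 q x y.
Proof. by rewrite /eval2 rmorphB !hornerD !hornerN. Qed.
Lemma eval2N p : eval2 (- p) x y = - eval2 p x y.
Proof. by rewrite /eval2 rmorphN !hornerN. Qed.
Lemma eval2M p q : eval2 (p * q) x y = eval2 p x y * eval2 q x y.
Proof. by rewrite /eval2 rmorphM !hornerM. Qed.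
Lemma eval2X p n : eval2 (p ^+ n) x y = eval2 p x y ^+ n.
Proof. by rewrite /eval2 rmorphXn !horner_exp. Qed.
Lemma eval2n n : eval2 n%:R x y = n%:R.
Proof. by rewrite /eval2 rmorph_nat !hornerMn !hornerC. Qed.
Lemma eval2PX : eval2 PX x y = x.
Proof. by rewrite /eval2 /PX map_polyC /= map_polyX !hornerE. Qed.
Lemma eval2PY : eval2 PY x y = y.
Proof. by rewrite /eval2 /PY map_polyX !hornerE. Qed.
End Ev.
Definition eval2E := (eval2D, eval2B, eval2N, eval2M, eval2X, eval2n, eval2PX, eval2PY).

Lemma F3E x y : eval2 F3 x y = 6%:R * (x ^+ 2 - y ^+ 2) * (x ^+ 2 + y ^+ 2) ^+ 2
  + 3%:R * x ^+ 5 - 6%:R * x ^+ 3 * y ^+ 2 - 9%:R * x * y ^+ 4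
  - 2%:R * x ^+ 2 * y ^+ 2.
Proof. by rewrite /F3 !eval2E. Qed.

Lemma nz (n : nat) : (n.+1)%:R != 0 :> algC.
Proof. by rewrite pnatr_eq0. Qed.


Definition Dp : bipoly := PX ^+ 2 + PY ^+ 2.
Definition n1 : bipoly := 6%:R * PX + 13%:R * Dp.
Definition d1 : bipoly := Dp.
Definition n2 : bipoly := - (6%:R * PY * (2%:R * PX ^+ 2 + 9%:R * PX * Dp + 6%:R * Dp ^+ 2)).
Definition d2 : bipoly := PX * Dp ^+ 2.

Definition F3f (x y : algC) := 6%:R * (x ^+ 2 - y ^+ 2) * (x ^+ 2 + y ^+ 2) ^+ 2
  + 3%:R * x ^+ 5 - 6%:R * x ^+ 3 * y ^+ 2 - 9%:R * x * y ^+ 4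
  - 2%:R * x ^+ 2 * y ^+ 2.
Definition Hf (X Y : algC) := 6%:R * X ^+ 2 + 3%:R * X ^+ 3 - Y ^+ 2 * (2%:R * X ^+ 2 + 9%:R * X + 6%:R).

Lemma n1E x y : eval2 n1 x y = 6%:R * x + 13%:R * (x ^+ 2 + y ^+ 2).
Proof. by rewrite /n1 /Dp !eval2E. Qed.
Lemma d1E x y : eval2 d1 x y = x ^+ 2 + y ^+ 2.
Proof. by rewrite /d1 /Dp !eval2E. Qed.
Lemma n2E x y : eval2 n2 x y = - (6%:R * y * (2%:R * x ^+ 2 + 9%:R * x * (x ^+ 2 + y ^+ 2) + 6%:R * (x ^+ 2 + y ^+ 2) ^+ 2)).
Proof. by rewrite /n2 /Dp !eval2E. Qed.
Lemma d2E x y : eval2 d2 x y = x * (x ^+ 2 + y ^+ 2) ^+ 2.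
Proof. by rewrite /d2 /Dp !eval2E. Qed.

Lemma F3_inv x y : x ^+ 2 + y ^+ 2 != 0 ->
  F3f x y = (x ^+ 2 + y ^+ 2) ^+ 4 * Hf (x / (x ^+ 2 + y ^+ 2)) (- y / (x ^+ 2 + y ^+ 2)).
Proof. move=> hD. rewrite /F3f /Hf. field. by []. Qed.

Lemma F3_inv2 X Y : X ^+ 2 + Y ^+ 2 != 0 ->
  F3f (X / (X ^+ 2 + Y ^+ 2)) (- Y / (X ^+ 2 + Y ^+ 2)) = Hf X Y / (X ^+ 2 + Y ^+ 2) ^+ 4.
Proof. move=> hS. rewrite /F3f /Hf. field. by []. Qed.

Definition fE (u : algC) := u ^+ 3 - 75%:R * u + 74%:R.
Definition wE (u : algC) := u ^+ 2 + u - 74%:R.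

Lemma E_side u v : v ^+ 2 = fE u -> wE u != 0 ->
  let X := mapX u in let Y := mapY u v in X ^+ 2 + Y ^+ 2 != 0 ->
  Hf X Y = 0 /\
  (X != 0 ->
   (6%:R * (X / (X ^+ 2 + Y ^+ 2)) + 13%:R * ((X / (X ^+ 2 + Y ^+ 2)) ^+ 2 + (- Y / (X ^+ 2 + Y ^+ 2)) ^+ 2))
     / ((X / (X ^+ 2 + Y ^+ 2)) ^+ 2 + (- Y / (X ^+ 2 + Y ^+ 2)) ^+ 2) = u /\
   - (6%:R * (- Y / (X ^+ 2 + Y ^+ 2)) * (2%:R * (X / (X ^+ 2 + Y ^+ 2)) ^+ 2
       + 9%:R * (X / (X ^+ 2 + Y ^+ 2)) * ((X / (X ^+ 2 + Y ^+ 2)) ^+ 2 + (- Y / (X ^+ 2 + Y ^+ 2)) ^+ 2)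
       + 6%:R * ((X / (X ^+ 2 + Y ^+ 2)) ^+ 2 + (- Y / (X ^+ 2 + Y ^+ 2)) ^+ 2) ^+ 2))
     / ((X / (X ^+ 2 + Y ^+ 2)) * ((X / (X ^+ 2 + Y ^+ 2)) ^+ 2 + (- Y / (X ^+ 2 + Y ^+ 2)) ^+ 2) ^+ 2) = v).
Proof.
move=> hv hw X Y hS.
have hY2 : Y ^+ 2 = fE u * (u - 13%:R) ^+ 2 / (4%:R * wE u ^+ 2).
  rewrite /Y /mapY -hv /wE. field. by rewrite -/(wE u) hw.
split.
  rewrite /Hf hY2 /X /mapX /fE /wE. field. by rewrite -/(wE u) hw.
move=> hX.
have hu : u = 6%:R * X + 13%:R by rewrite /X /mapX; field.
have hwq : wE u = 18%:R * (2%:R * X ^+ 2 + 9%:R * X + 6%:R) by rewrite /wE hu; ring.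
have hq : 2%:R * X ^+ 2 + 9%:R * X + 6%:R != 0.
  apply: contraNneq hw => h; by rewrite hwq h mulr0.
split.
  rewrite [RHS]hu. field. exact: hS.
apply: (@etrans _ _ (6%:R * Y * (2%:R * X ^+ 2 + 9%:R * X + 6%:R) / X)).
  field. by rewrite hX hS.
have hu13 : u - 13%:R = 6%:R * X by rewrite hu; ring.
rewrite /Y /mapY -/(wE u) hwq hu13.
field. by rewrite hq hX.
Qed.

Lemma C3_side x y : F3f x y = 0 -> x != 0 -> x ^+ 2 + y ^+ 2 != 0 ->
  let u := (6%:R * x + 13%:R * (x ^+ 2 + y ^+ 2)) / (x ^+ 2 + y ^+ 2) in
  let v := - (6%:R * y * (2%:R * x ^+ 2 + 9%:R * x * (x ^+ 2 + y ^+ 2) + 6%:R * (x ^+ 2 + y ^+ 2) ^+ 2))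
           / (x * (x ^+ 2 + y ^+ 2) ^+ 2) in
  [/\ v ^+ 2 = fE u, wE u != 0, mapX u ^+ 2 + mapY u v ^+ 2 != 0 & phi u v = (x, y)].
Proof.
move=> hF hx hD u v.
pose X := x / (x ^+ 2 + y ^+ 2); pose Y := - y / (x ^+ 2 + y ^+ 2).
have hH : Hf X Y = 0.
  move: hF; rewrite F3_inv // => /eqP; rewrite mulf_eq0 expf_eq0 (negbTE hD) andbF /=.
  by move/eqP.
have hX : X != 0 by rewrite /X mulf_neq0 // invr_eq0.
have hu : u = 6%:R * X + 13%:R by rewrite /u /X; field.
pose q := 2%:R * X ^+ 2 + 9%:R * X + 6%:R.
have hv : v = 6%:R * Y * q / X.
  rewrite /v /q /X /Y. field; by rewrite hD hx.
have hY2q : Y ^+ 2 * q = 6%:R * X ^+ 2 + 3%:R * X ^+ 3.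
  by apply/eqP; rewrite eq_sym -subr_eq0; apply/eqP; rewrite -hH /Hf.
have hq : q != 0.
  apply/negP => /eqP hq0.
  move: hY2q; rewrite hq0 mulr0 => /eqP.
  rewrite eq_sym (_ : _ + _ = 3%:R * X ^+ 2 * (X + 2%:R)); last by ring.
  rewrite !mulf_eq0 (negbTE (nz 2)) /= (negbTE hx) invr_eq0 (negbTE hD) /= => hX2.
  have hXv : X = - 2%:R by apply/eqP; rewrite -subr_eq0 opprK.
  have : q = - 4%:R by rewrite /q hXv; ring.
  by rewrite hq0 => /eqP; rewrite eq_sym oppr_eq0 (negbTE (nz 3)).
have hw : wE u = 18%:R * q by rewrite /wE hu /q; ring.
have hwn : wE u != 0 by rewrite hw (mulf_neq0 (nz 17) hq).
have hmX : mapX u = X by rewrite /mapX hu; field.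
have hmY : mapY u v = Y.
  rewrite /mapY -/(wE u) hw hv hu /q. field. by rewrite -/q hq hX.
have hS : X ^+ 2 + Y ^+ 2 = (x ^+ 2 + y ^+ 2)^-1 by rewrite /X /Y; field.
split => //.
- rewrite hv hu.
  have -> : (6%:R * Y * q / X) ^+ 2 = 36%:R * q * (Y ^+ 2 * q) / X ^+ 2 by field.
  rewrite hY2q /q /fE. field.
  exact: hX.
- by rewrite hmX hmY hS invr_eq0.
- rewrite /phi hmX hmY hS /X /Y. congr pair; field; exact: hD.
Qed.

Lemma quad_roots (b c z : algC) : z ^+ 2 + b * z + c = 0 ->
  z \in [:: (- b + sqrtC (b ^+ 2 - 4%:R * c)) / 2%:R; (- b - sqrtC (b ^+ 2 - 4%:R * c)) / 2%:R].
Proof.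
move=> hz; set s := sqrtC _.
have hs : s ^+ 2 = b ^+ 2 - 4%:R * c by rewrite sqrtCK.
have : (z - (- b + s) / 2%:R) * (z - (- b - s) / 2%:R) = 0.
  rewrite -hz. have -> : c = (b ^+ 2 - s ^+ 2) / 4%:R by rewrite hs; field.
  by field.
move/eqP; rewrite mulf_eq0 !subr_eq0 => /orP [] /eqP ->; by rewrite !inE eqxx ?orbT.
Qed.

Definition sqpts (f : algC -> algC) (us : seq algC) : seq (algC * algC) :=
  flatten [seq [:: (u, sqrtC (f u)); (u, - sqrtC (f u))] | u <- us].

Lemma mem_sqpts f us u v : u \in us -> v ^+ 2 = f u -> (u, v) \in sqpts f us.
Proof.
move=> hu hv; apply/flatten_mapP; exists u => //.
have : (v - sqrtC (f u)) * (v + sqrtC (f u)) = 0.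
  have -> : (v - sqrtC (f u)) * (v + sqrtC (f u)) = v ^+ 2 - sqrtC (f u) ^+ 2 by ring.
  by rewrite sqrtCK hv subrr.
move/eqP; rewrite mulf_eq0 subr_eq0 addr_eq0 !inE => /orP [] /eqP ->; by rewrite eqxx ?orbT.
Qed.

Definition sE : seq (algC * algC) := sqpts fE
  [:: (- 1 + sqrtC (1 ^+ 2 - 4%:R * (- 74%:R))) / 2%:R; (- 1 - sqrtC (1 ^+ 2 - 4%:R * (- 74%:R))) / 2%:R;
      13%:R;
      (- 10%:R + sqrtC (10%:R ^+ 2 - 4%:R * (- 83%:R))) / 2%:R; (- 10%:R - sqrtC (10%:R ^+ 2 - 4%:R * (- 83%:R))) / 2%:R].

Lemma E_good u v : v ^+ 2 = fE u -> (u, v) \notin sE ->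
  [/\ wE u != 0, u != 13%:R & mapX u ^+ 2 + mapY u v ^+ 2 != 0].
Proof.
move=> hv hn.
have hw : wE u != 0.
  apply/negP => /eqP h; move/negP: hn; apply; apply: mem_sqpts hv.
  have := quad_roots 1 (- 74%:R) u.
  rewrite mul1r -h /wE => /(_ erefl). by rewrite !inE => /orP [] ->; rewrite ?orbT.
have h13 : u != 13%:R.
  apply/negP => /eqP h; move/negP: hn; apply; apply: mem_sqpts hv.
  by rewrite h !inE eqxx !orbT.
split => //.
have hY2 : mapY u v ^+ 2 = fE u * (u - 13%:R) ^+ 2 / (4%:R * wE u ^+ 2).
  rewrite /mapY -hv /wE. field. by rewrite -/(wE u) hw.
have -> : mapX u ^+ 2 + mapY u v ^+ 2 = (u - 13%:R) ^+ 2 * (u ^+ 2 + 10%:R * u - 83%:R) / (36%:R * wE u).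
  rewrite hY2 /mapX /fE /wE. field. by rewrite -/(wE u) hw.
rewrite !mulf_eq0 invr_eq0 mulf_eq0 (negbTE hw) orbF subr_eq0 (negbTE h13) (negbTE (nz 35)) /= orbF.
apply/negP => /eqP h; move/negP: hn; apply; apply: mem_sqpts hv.
move: (quad_roots 10%:R (- 83%:R) u) => /(_ h).
by rewrite !inE => /orP [] ->; rewrite ?orbT.
Qed.


Lemma C3_nonzero x y : F3f x y = 0 -> (x, y) \notin [:: (0, 0)] -> x != 0 /\ x ^+ 2 + y ^+ 2 != 0.
Proof.
move=> hF hn.
have hx : x != 0.
  apply/negP => /eqP hx0; move/negP: hn; apply; rewrite inE.
  move: hF; rewrite /F3f hx0 => /eqP.
  have -> : 6%:R * (0 ^+ 2 - y ^+ 2) * (0 ^+ 2 + y ^+ 2) ^+ 2 + 3%:R * 0 ^+ 5 - 6%:R * 0 ^+ 3 * y ^+ 2 -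
     9%:R * 0 * y ^+ 4 - 2%:R * 0 ^+ 2 * y ^+ 2 = - 6%:R * y ^+ 6 :> algC by ring.
  by rewrite mulf_eq0 oppr_eq0 (negbTE (nz 5)) expf_eq0 /= => /eqP ->.
split => //.
apply/negP => /eqP hD.
have hy2 : y ^+ 2 = - x ^+ 2 by apply/eqP; rewrite -addr_eq0 addrC hD.
have : F3f x y = 2%:R * x ^+ 4.
  have -> : F3f x y = 6%:R * (x ^+ 2 - y ^+ 2) * (x ^+ 2 + y ^+ 2) ^+ 2 + 3%:R * x ^+ 5
     - 6%:R * x ^+ 3 * y ^+ 2 - 9%:R * x * (y ^+ 2) ^+ 2 - 2%:R * x ^+ 2 * y ^+ 2 by rewrite /F3f; ring.
  rewrite hy2; ring.
rewrite hF => /eqP; rewrite eq_sym mulf_eq0 (negbTE (nz 1)) expf_eq0 /= (negbTE hx) //.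
Qed.

Lemma wd : weier_disc (- 75%:R) 74%:R = - (2%:R ^+ 6 * 3%:R ^+ 7 * 11%:R).
Proof. rewrite /weier_disc. ring. Qed.
Lemma wdn : weier_disc (- 75%:R) 74%:R != 0.
Proof. by rewrite wd oppr_eq0 !mulf_neq0 ?expf_neq0 ?pnatr_eq0. Qed.
Lemma jv : j_invariant (- 75%:R) 74%:R = 62500%:R / 33%:R.
Proof. rewrite /j_invariant wd. by field. Qed.

Theorem mainTheorem1 :
  irreducible2 F3 /\
  weier_disc (- 75%:R) 74%:R != 0 /\
  (exists n1 d1 n2 d2 : {poly {poly rat}},
     (exists s : seq (algC * algC), forall u v : algC, onE u v -> (u, v) \notin s ->
        phi_def u v /\ ratmap_def n1 d1 n2 d2 (phi u v).1 (phi u v).2) /\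
     (exists s : seq (algC * algC), forall x y : algC, onC3 x y -> (x, y) \notin s ->
        ratmap_def n1 d1 n2 d2 x y /\
        phi_def (ratmap n1 d1 n2 d2 x y).1 (ratmap n1 d1 n2 d2 x y).2) /\
     (forall u v : algC, onE u v -> phi_def u v ->
        onC3 (phi u v).1 (phi u v).2 /\
        (ratmap_def n1 d1 n2 d2 (phi u v).1 (phi u v).2 ->
           ratmap n1 d1 n2 d2 (phi u v).1 (phi u v).2 = (u, v))) /\
     (forall x y : algC, onC3 x y -> ratmap_def n1 d1 n2 d2 x y ->
        onE (ratmap n1 d1 n2 d2 x y).1 (ratmap n1 d1 n2 d2 x y).2 /\
        (phi_def (ratmap n1 d1 n2 d2 x y).1 (ratmap n1 d1 n2 d2 x y).2 ->
           phi (ratmap n1 d1 n2 d2 x y).1 (ratmap n1 d1 n2 d2 x y).2 = (x, y)))) /\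
  onC3 (- (2%:R)^-1) 0 /\
  j_invariant (- 75%:R) 74%:R = 62500%:R / 33%:R.
Proof.
split; first exact: F3_irr.
split; first exact: wdn.
split; last first.
  split; first by rewrite /onC3 F3E; field.
  exact: jv.
exists n1, d1, n2, d2.
split.
  exists sE => u v hE hn.
  have [hw h13 hS] := E_good _ _ hE hn.
  split; first by split.
  rewrite /ratmap_def d1E d2E /phi /=.
  have hX : mapX u != 0.
    by rewrite /mapX; apply: mulf_neq0; [rewrite subr_eq0 | rewrite invr_eq0 pnatr_eq0].
  have hDp : (mapX u / (mapX u ^+ 2 + mapY u v ^+ 2)) ^+ 2 + (- mapY u v / (mapX u ^+ 2 + mapY u v ^+ 2)) ^+ 2
     = (mapX u ^+ 2 + mapY u v ^+ 2)^-1 by field.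
  rewrite hDp invr_eq0 hS; split => //.
  by rewrite mulf_neq0 ?expf_neq0 ?invr_eq0 // mulf_neq0 ?invr_eq0.
split.
  exists [:: (0, 0)] => x y hC hn.
  have [hx hD] := C3_nonzero _ _ (etrans (esym (F3E x y)) hC) hn.
  rewrite /ratmap_def /phi_def /ratmap n1E d1E n2E d2E /=.
  have [_ hw hS _] := C3_side _ _ (etrans (esym (F3E x y)) hC) hx hD.
  by rewrite hD mulf_neq0 ?expf_neq0.
split.
  move=> u v hE [hw hS].
  have [hH hr] := E_side _ _ hE hw hS.
  split.
    rewrite /onC3 F3E /phi /=.
    by rewrite -[LHS]/(F3f _ _) (F3_inv2 _ _ hS) hH mul0r.
  rewrite /ratmap_def /ratmap n1E d1E n2E d2E /phi /= => -[_ hd2].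
  have hX : mapX u != 0.
    apply: contraNneq hd2 => ->; by rewrite !mul0r.
  by have [-> ->] := hr hX.
move=> x y hC; rewrite /ratmap_def /ratmap n1E d1E n2E d2E /= => -[hD hd2].
have hx : x != 0 by apply: contraNneq hd2 => ->; rewrite mul0r.
have [hv _ _ hphi] := C3_side _ _ (etrans (esym (F3E x y)) hC) hx hD.
by split.
Qed.
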